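(* Let $\mathcal{A}=(Q,\Sigma,q_I,\delta,\Omega,\mathrm{Cst})$ be a parity automaton with costs. Let $(\rho_j^1)_{j\in\mathbb{N}}$ and $(\rho_j^2)_{j\in\mathbb{N}}$ be sequences of non-empty finite runs of $\mathcal{A}$ such that, for every $j$, $\rho_j^1$ and $\rho_j^2$ have the same type, and such that $\sup_j |\rho_j^2| = d<\infty$ (where $|\rho|$ is the number of transitions of $\rho$). Suppose that $\rho'=\rho_0^1\rho_1^1\rho_2^1\cdots$ is an infinite run (i.e., each $\rho_j^1$ ends in the state in which $\rho_{j+1}^1$ starts), and let $\rho''=\rho_0^2\rho_1^2\rho_2^2\cdots$. If $\limsup_{n\to\infty}\mathrm{Cor}(\rho',n)\le b$ for some $b\in\mathbb{N}$, then $\limsup_{n\to\infty}\mathrm{Cor}(\rho'',n)\le (b+2)\cdot d$. In particular, if $\rho'$ is accepting, then $\rho''$ is accepting as well.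
   Context: A parity automaton with costs is a tuple $\mathcal{A}=(Q,\Sigma,q_I,\delta,\Omega,\mathrm{Cst})$ with a finite set $Q$ of states, a finite alphabet $\Sigma$, an initial state $q_I\in Q$, a deterministic complete transition function $\delta\colon Q\times\Sigma\to Q$ (also viewed as the set of transitions $(q,a,\delta(q,a))$), a coloring $\Omega\colon Q\to\mathbb{N}$, and a cost function $\mathrm{Cst}$ assigning to every transition either $\epsilon$ or $\mathtt{i}$ (the latter are called increment-transitions). Throughout, $\Omega(Q)$ contains both an even and an odd color. A run from $q_0$ on $a_0a_1\cdots$ is the sequence of transitions $(q_0,a_0,q_1)(q_1,a_1,q_2)\cdots$ with $q_{j+1}=\delta(q_j,a_j)$; the cost of a finite run is its number of increment-transitions. For odd $c$, let $\mathrm{Ans}(c)=\{c'\in\Omega(Q)\mid c'>c,\ c'\text{ even}\}$. For an infinite run $\rho=(q_0,a_0,q_1)(q_1,a_1,q_2)\cdots$ and $n\in\mathbb{N}$, $\mathrm{Cor}(\rho,n)=0$ if $\Omega(q_n)$ is even, and otherwise $\mathrm{Cor}(\rho,n)$ is the minimum of the costs of $(q_n,a_n,q_{n+1})\cdots(q_{n'-1},a_{n'-1},q_{n'})$ over all $n'>n$ with $\Omega(q_{n'})\in\mathrm{Ans}(\Omega(q_n))$, with $\min\emptyset=\infty$. An infinite run $\rho$ is accepting if $\limsup_{n\to\infty}\mathrm{Cor}(\rho,n)<\infty$. The type of a non-empty finite run $(q_0,a_0,q_1)\cdots(q_{n-1},a_{n-1},q_n)$ is the tuple $(q_0,q_n,c_0,c_1,\ell)$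 where (with $\max\emptyset=\bot$) $c_0=\max\{\Omega(q_j)\mid 0\le j\le n,\ \Omega(q_j)\text{ even}\}$, $c_1=\max\{\Omega(q_j)\mid 0\le j\le n,\ \Omega(q_j)\text{ odd},\ \Omega(q_{j'})\notin\mathrm{Ans}(\Omega(q_j))\text{ for all }j<j'\le n\}$ (the maximal unanswered request), and $\ell=\mathtt{i}$ iff the run contains an increment-transition, $\ell=\epsilon$ otherwise. *)

(* Defs.v *)
From mathcomp Require Import all_boot.
From mathcomp Require Import boolp.

Set Implicit Arguments.
Unset Strict Implicit.
Unset Printing Implicit Defensive.

(* Parity automaton with costs over state type Q and alphabet S.
   Cst q a = true  iff the transition (q, a, delta q a) is an increment-transition. *)
Record pac (Q S : finType) := Pac {
  qI : Q;
  delta : Q -> S -> Q;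
  Omega : Q -> nat;
  Cst : Q -> S -> bool
}.

Section Defs.
Variables (Q S : finType) (A : pac Q S).

Definition answers (c c' : nat) : bool :=
  [&& c < c', ~~ odd c' & [exists q, Omega A q == c']].

Definition frun := (Q * seq S)%type.

Definition fstates (r : frun) : seq Q := r.1 :: scanl (delta A) r.1 r.2.
Definition fstart (r : frun) : Q := r.1.
Definition fend (r : frun) : Q := last r.1 (scanl (delta A) r.1 r.2).
Definition flen (r : frun) : nat := size r.2.
Definition ftrans (r : frun) : seq (Q * S) := zip (fstates r) r.2.

Definition optmax (s : seq nat) : option nat :=
  if s is [::] then None else Some (\max_(x <- s) x).

Definition fcolors (r : frun) : seq nat := map (Omega A) (fstates r).

Definition ftype_c0 (r : frun) : option nat :=
  optmax [seq c <- fcolors r | ~~ odd c].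

(* c1: maximal unanswered request *)
Definition ftype_c1 (r : frun) : option nat :=
  let cs := fcolors r in
  optmax [seq nth 0 cs j | j <- iota 0 (size cs) &
            odd (nth 0 cs j) &&
            all (fun c' => ~~ answers (nth 0 cs j) c') (drop j.+1 cs)].

(* l = i (true) iff the run contains an increment-transition *)
Definition ftype_l (r : frun) : bool := has (fun p => Cst A p.1 p.2) (ftrans r).

Definition ftype (r : frun) : Q * Q * option nat * option nat * bool :=
  (fstart r, fend r, ftype_c0 r, ftype_c1 r, ftype_l r).

Definition is_irun (s : nat -> Q) (w : nat -> S) : Prop :=
  forall n, s n.+1 = delta A (s n) (w n).

Definition offset (rs : nat -> frun) (j : nat) : nat := \sum_(i < j) flen (rs i).

Definition is_concat (rs : nat -> frun) (s : nat -> Q) (w : nat -> S) : Prop :=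
  forall j k, k < flen (rs j) ->
    s (offset rs j + k) = nth (fstart (rs j)) (fstates (rs j)) k /\
    (forall a : S, w (offset rs j + k) = nth a (rs j).2 k).

Definition seg_cost (s : nat -> Q) (w : nat -> S) (n n' : nat) : nat :=
  \sum_(n <= i < n') (Cst A (s i) (w i) : nat).

Definition cor_cand (s : nat -> Q) (w : nat -> S) (n m : nat) : Prop :=
  exists n', n < n' /\ answers (Omega A (s n)) (Omega A (s n')) /\
             seg_cost s w n n' = m.

Lemma cor_cand_ex s w n :
  (exists m, cor_cand s w n m) -> exists m, `[< cor_cand s w n m >].
Proof. by case=> m Hm; exists m; apply/asboolP. Qed.

(* Cor(rho, n) in N u {oo}; None stands for oo *)
Definition Cor (s : nat -> Q) (w : nat -> S) (n : nat) : option nat :=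
  if ~~ odd (Omega A (s n)) then Some 0 else
  match pselect (exists m, cor_cand s w n m) with
  | left h => Some (ex_minn (cor_cand_ex h))
  | right _ => None
  end.

Definition ole (x : option nat) (b : nat) : bool :=
  if x is Some c then c <= b else false.

(* limsup_{n -> oo} Cor(rho, n) <= b  (for N u {oo}-valued sequences and b in N,
   this is: eventually Cor(rho, n) <= b) *)
Definition limsup_Cor_le (s : nat -> Q) (w : nat -> S) (b : nat) : Prop :=
  exists N, forall n, N <= n -> ole (Cor s w n) b.

Definition accepting (s : nat -> Q) (w : nat -> S) : Prop :=
  exists b, limsup_Cor_le s w b.

End Defs.

(* Main.v *)
Require Import Defs.
From mathcomp Require Import all_boot.
From mathcomp Require Import boolp.
From mathcomp Require Import zify.

Set Implicit Arguments.
Unset Strict Implicit.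
Unset Printing Implicit Defensive.

Lemma optmax_in (s : seq nat) x : x \in s -> exists m, optmax s = Some m /\ x <= m.
Proof.
case: s => [//|a s] Hx; exists (\max_(y <- a :: s) y); split => //.
exact: leq_bigmax_seq.
Qed.

Lemma optmax_out (s : seq nat) m : optmax s = Some m -> m \in s.
Proof.
case: s => [//|a s] [<-].
elim: s a => [|b s IH] a; first by rewrite big_cons big_nil maxn0 inE.
rewrite big_cons /maxn; case: ifP => _; last by rewrite inE eqxx.
by rewrite inE IH orbT.
Qed.

Section Frun.
Variables (Q S : finType) (A : pac Q S).

Lemma size_fstates (r : frun Q S) : size (fstates A r) = (flen r).+1.
Proof. by rewrite /fstates /= size_scanl. Qed.

Lemma size_fcolors (r : frun Q S) : size (fcolors A r) = (flen r).+1.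
Proof. by rewrite /fcolors size_map size_fstates. Qed.

Lemma colE (r : frun Q S) x k : k <= flen r ->
  nth 0 (fcolors A r) k = Omega A (nth x (fstates A r) k).
Proof. by move=> Hk; rewrite /fcolors (nth_map x) // size_fstates. Qed.

Lemma fend_nth (r : frun Q S) x : nth x (fstates A r) (flen r) = fend A r.
Proof.
rewrite /fstates /fend /flen.
by rewrite -(size_scanl (delta A) r.1 r.2) (_ : size _ = (size (r.1 :: scanl (delta A) r.1 r.2)).-1) // nth_last.
Qed.

Lemma c1_in (r : frun Q S) k : k <= flen r ->
  let cs := fcolors A r in
  odd (nth 0 cs k) -> all (fun c' => ~~ answers A (nth 0 cs k) c') (drop k.+1 cs) ->
  exists c1, ftype_c1 A r = Some c1 /\ nth 0 cs k <= c1.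
Proof.
move=> Hk cs Ho Ha; apply: optmax_in; apply/mapP; exists k => //.
by rewrite mem_filter Ho Ha mem_iota /cs size_fcolors /= add0n ltnS Hk.
Qed.

Lemma c1_out (r : frun Q S) c1 : ftype_c1 A r = Some c1 ->
  let cs := fcolors A r in
  exists k, k <= flen r /\ nth 0 cs k = c1 /\ odd c1 /\
    all (fun c' => ~~ answers A c1 c') (drop k.+1 cs).
Proof. move=> H.
move: H => /optmax_out /mapP [k]; rewrite mem_filter mem_iota size_fcolors add0n /=.
move=> /andP [/andP [Ho Ha] Hk] ->; exists k; split; first by rewrite -ltnS.
by [].
Qed.

Lemma c0_in (r : frun Q S) k : k <= flen r -> ~~ odd (nth 0 (fcolors A r) k) ->
  exists e0, ftype_c0 A r = Some e0 /\ nth 0 (fcolors A r) k <= e0.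
Proof.
move=> Hk He; apply: optmax_in; rewrite mem_filter He mem_nth //.
by rewrite size_fcolors ltnS.
Qed.

Lemma c0_out (r : frun Q S) e0 : ftype_c0 A r = Some e0 ->
  exists k, k <= flen r /\ nth 0 (fcolors A r) k = e0 /\ ~~ odd e0.
Proof.
move=> /optmax_out; rewrite mem_filter => /andP [He /(nthP 0) [k Hk Hn]].
by exists k; rewrite -ltnS -size_fcolors Hn.
Qed.

Lemma cor_le s w n m m' : cor_cand A s w n m -> m <= m' -> ole (Cor A s w n) m'.
Proof.
move=> Hm Hmm; rewrite /Cor; case: ifP => // _.
case: pselect => [h|h]; last by exfalso; apply: h; exists m.
case: ex_minnP => x _ Hx /=; apply: leq_trans (Hx m _) Hmm; exact/asboolP.
Qed.

Lemma cor_get s w n b : odd (Omega A (s n)) -> ole (Cor A s w n) b ->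
  exists m, m <= b /\ cor_cand A s w n m.
Proof.
move=> Ho; rewrite /Cor Ho /=; case: pselect => [h|//].
case: ex_minnP => x Hx _ /= Hb; exists x; split => //; exact/asboolP.
Qed.

End Frun.

Section Run.
Variables (Q S : finType) (A : pac Q S) (rs : nat -> frun Q S) (s : nat -> Q) (w : nat -> S).

Lemma offS j : offset rs j.+1 = offset rs j + flen (rs j).
Proof. by rewrite /offset big_ord_recr. Qed.

Lemma off0 : offset rs 0 = 0.
Proof. by rewrite /offset big_ord0. Qed.

Lemma off_mono i j : i <= j -> offset rs i <= offset rs j.
Proof.
move=> /subnK <-; elim: (j - i) => [//|m IH].
by rewrite addSn offS; apply: leq_trans IH (leq_addr _ _).
Qed.

Lemma off_le_d d : (forall j, flen (rs j) <= d) -> forall j, offset rs j <= j * d.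
Proof.
move=> Hd; elim=> [|j IH]; first by rewrite off0.
by rewrite offS mulSn addnC leq_add.
Qed.

Hypothesis Hne : forall j, 0 < flen (rs j).

Lemma off_ge j : j <= offset rs j.
Proof. elim: j => [//|j IH]; rewrite offS; have := Hne j; lia. Qed.

Lemma block n : exists j k, k < flen (rs j) /\ n = offset rs j + k.
Proof.
elim: n => [|n [j [k [Hk ->]]]]; first by exists 0, 0; rewrite off0 Hne.
case: (ltnP k.+1 (flen (rs j))) => H.
  by exists j, k.+1; rewrite addnS.
exists j.+1, 0; rewrite Hne offS addn0; split => //; lia.
Qed.

Hypothesis Hc : is_concat A rs s w.
Hypothesis Hch : forall j, fend A (rs j) = fstart (rs j.+1).

Lemma stateE j k : k <= flen (rs j) ->
  s (offset rs j + k) = nth (fstart (rs j)) (fstates A (rs j)) k.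
Proof.
rewrite leq_eqVlt => /orP [/eqP ->|Hk]; last by case: (Hc Hk).
rewrite fend_nth -offS -(addn0 (offset rs j.+1)) Hch.
by case: (Hc (Hne j.+1)).
Qed.

Lemma seg_split a b c : a <= b -> b <= c ->
  seg_cost A s w a c = seg_cost A s w a b + seg_cost A s w b c.
Proof. by move=> H1 H2; rewrite /seg_cost (@big_cat_nat _ _ _ b). Qed.

Lemma seg_le a b : seg_cost A s w a b <= b - a.
Proof.
rewrite /seg_cost -(muln1 (b - a)) -sum_nat_const_nat.
by apply: leq_sum => i _; case: Cst.
Qed.

Lemma seg_mono a a' b' b : a <= a' -> a' <= b' -> b' <= b ->
  seg_cost A s w a' b' <= seg_cost A s w a b.
Proof.
move=> H1 H2 H3; rewrite (seg_split H1 (leq_trans H2 H3)) (seg_split H2 H3).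
by rewrite addnCA leq_addr.
Qed.

Lemma blk_sum j : seg_cost A s w (offset rs j) (offset rs j.+1) =
  \sum_(0 <= k < flen (rs j)) (Cst A (s (offset rs j + k)) (w (offset rs j + k)) : nat).
Proof.
rewrite /seg_cost offS -{1}(add0n (offset rs j)) big_addn addnC addnK.
by apply: eq_bigr => i _; rewrite addnC.
Qed.

Lemma trans_nth j k : k < flen (rs j) ->
  nth (fstart (rs j), w 0) (Defs.ftrans A (rs j)) k = (s (offset rs j + k), w (offset rs j + k)).
Proof.
move=> Hk; case: (Hc Hk) => H1 H2.
rewrite /Defs.ftrans nth_zip_cond size_zip size_fstates minnE /= H1 (H2 (w 0)).
by rewrite ifT //; move: Hk; rewrite /flen; lia.
Qed.

Lemma size_ftrans j : size (Defs.ftrans A (rs j)) = flen (rs j).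
Proof. rewrite /Defs.ftrans size_zip size_fstates /flen; lia. Qed.

Lemma blk0 j : ~~ ftype_l A (rs j) -> seg_cost A s w (offset rs j) (offset rs j.+1) = 0.
Proof.
move=> /hasPn Hn; rewrite blk_sum big_nat big1 // => k /andP [_ Hk].
have := Hn (nth (fstart (rs j), w 0) (Defs.ftrans A (rs j)) k).
rewrite mem_nth ?size_ftrans // trans_nth //= => /(_ isT).
by case: Cst.
Qed.

Lemma blk1 j : ftype_l A (rs j) -> 0 < seg_cost A s w (offset rs j) (offset rs j.+1).
Proof.
move=> /(has_nthP (fstart (rs j), w 0)) [k]; rewrite size_ftrans => Hk.
rewrite trans_nth //= blk_sum big_mkord (bigD1 (Ordinal Hk)) //= => ->.
by [].
Qed.

Definition cnt a c := \sum_(a <= t < c) (ftype_l A (rs t) : nat).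

Lemma cnt_le a c : a <= c -> cnt a c <= seg_cost A s w (offset rs a) (offset rs c).
Proof.
move=> /subnK <-; elim: (c - a) => [|m IH]; first by rewrite /cnt big_geq.
rewrite addSn /cnt big_nat_recr ?leq_addl // (seg_split (off_mono (leq_addl m a))) ?off_mono //.
apply: leq_add => //; case E: (ftype_l A (rs (m + a))) => //; exact: blk1.
Qed.

Lemma cnt_ge d a c : (forall j, flen (rs j) <= d) -> a <= c ->
  seg_cost A s w (offset rs a) (offset rs c) <= cnt a c * d.
Proof.
move=> Hd /subnK <-; elim: (c - a) => [|m IH]; first by rewrite /seg_cost big_geq.
rewrite addSn /cnt big_nat_recr ?leq_addl // (seg_split (off_mono (leq_addl m a))) ?off_mono //.
rewrite mulnDl; apply: leq_add => //; case E: (ftype_l A (rs (m + a))).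
  by rewrite mul1n; apply: leq_trans (seg_le _ _) _; rewrite offS addKn.
by rewrite blk0 ?E.
Qed.

End Run.

Lemma main (Q S : finType) (A : pac Q S)
  (r1 r2 : nat -> frun Q S) (d b : nat)
  (Hne1 : forall j, 0 < flen (r1 j))
  (Hne2 : forall j, 0 < flen (r2 j))
  (Htype : forall j, ftype A (r1 j) = ftype A (r2 j))
  (Hd1 : forall j, flen (r2 j) <= d)
  (Hchain : forall j, fend A (r1 j) = fstart (r1 j.+1))
  (s1 : nat -> Q) (w1 : nat -> S) (s2 : nat -> Q) (w2 : nat -> S)
  (Hc1 : is_concat A r1 s1 w1)
  (Hc2 : is_concat A r2 s2 w2) :
  limsup_Cor_le A s1 w1 b -> limsup_Cor_le A s2 w2 ((b + 2) * d).
Proof.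
have Ht0 j : ftype_c0 A (r1 j) = ftype_c0 A (r2 j).
  by move: (Htype j); rewrite /ftype; case=> _ _ ->.
have Ht1 j : ftype_c1 A (r1 j) = ftype_c1 A (r2 j).
  by move: (Htype j); rewrite /ftype; case=> _ _ _ ->.
have Htl j : ftype_l A (r1 j) = ftype_l A (r2 j).
  by move: (Htype j); rewrite /ftype; case=> _ _ _ _ ->.
have Hch2 j : fend A (r2 j) = fstart (r2 j.+1).
  move: (Htype j) (Htype j.+1); rewrite /ftype; case=> _ <- _ _ _; case=> <- _ _ _ _.
  exact: Hchain.
have SE1 := stateE Hne1 Hc1 Hchain.
have SE2 := stateE Hne2 Hc2 Hch2.
move=> [N HN]; exists (N * d) => n Hn.
have [j [k [Hk En]]] := block Hne2 n.
have HjN : N <= j.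
  rewrite leqNgt; apply/negP => Hj.
  have H1 := off_le_d Hd1 j.+1; rewrite offS in H1.
  have H2 : j.+1 * d <= N * d by rewrite leq_mul2r Hj orbT.
  lia.
case Ho: (odd (Omega A (s2 n))); last by rewrite /Cor Ho.
have Hcn : Omega A (s2 n) = nth 0 (fcolors A (r2 j)) k.
  by rewrite En SE2 ?(ltnW Hk) // -colE // ltnW.
case Hall: (all (fun c' => ~~ answers A (nth 0 (fcolors A (r2 j)) k) c')
             (drop k.+1 (fcolors A (r2 j)))).
- have Ho' : odd (nth 0 (fcolors A (r2 j)) k) by rewrite -Hcn.
  have [c1 [Hc1r2 Hcc1]] := c1_in (ltnW Hk) Ho' Hall.
  rewrite -Ht1 in Hc1r2.
  have [k1 [Hk1 [Hnk1 [Ho1 Hall1]]]] := c1_out Hc1r2.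
  pose p := offset r1 j + k1.
  have Hp : Omega A (s1 p) = c1 by rewrite /p SE1 // -colE.
  have HpN : N <= p by have := off_ge Hne1 j; rewrite /p; lia.
  have Hop : odd (Omega A (s1 p)) by rewrite Hp.
  have [m [Hmb [n' [Hpn' [Hans Hcost]]]]] := cor_get Hop (HN p HpN).
  rewrite Hp in Hans.
  have Hbig : offset r1 j.+1 < n'.
    rewrite ltnNge; apply/negP => Hle.
    rewrite offS in Hle.
    have Hk' : n' - offset r1 j <= flen (r1 j) by rewrite /p in Hpn'; lia.
    have En'' : n' = offset r1 j + (n' - offset r1 j) by rewrite /p in Hpn'; lia.
    move: Hans; rewrite En'' SE1 // -colE //.
    move/(all_nthP 0): Hall1 => /(_ (n' - offset r1 j - k1.+1)).
    rewrite size_drop size_fcolors nth_drop.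
    have -> : k1.+1 + (n' - offset r1 j - k1.+1) = n' - offset r1 j
      by rewrite /p in Hpn'; lia.
    move=> H Ha.
    have H' : (n' - offset r1 j - k1.+1) < (flen (r1 j)).+1 - k1.+1 by rewrite /p in Hpn'; lia.
    by move: (H H'); rewrite Ha.
  have [j2 [k2 [Hk2 En']]] := block Hne1 n'.
  have Hjj2 : j < j2.
    rewrite ltnNge; apply/negP => H.
    have := off_mono r1 (H : j2.+1 <= j.+1); rewrite offS; lia.
  have He : Omega A (s1 n') = nth 0 (fcolors A (r1 j2)) k2
    by rewrite En' SE1 ?(ltnW Hk2) // -colE // ltnW.
  move: Hans; rewrite /answers He => /and3P [Hlt Hev _].
  have [e0 [He0 Hee0]] := c0_in (ltnW Hk2) Hev.
  rewrite Ht0 in He0.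
  have [k3 [Hk3 [Hnk3 Hev3]]] := c0_out He0.
  pose n'' := offset r2 j2 + k3.
  have Hn'' : Omega A (s2 n'') = e0 by rewrite /n'' SE2 // -colE.
  have Ho2 := off_mono r2 Hjj2.
  have Ho1' := off_mono r1 Hjj2.
  have Hkk : k < flen (r2 j) := Hk.
  have Hnlt : n < offset r2 j.+1 by rewrite offS En; lia.
  apply: (@cor_le _ _ _ _ _ _ (seg_cost A s2 w2 n n'')).
    exists n''; split; first by rewrite /n''; lia.
    split; last by [].
    rewrite Hn'' Hcn /answers; apply/and3P; split => //.
      lia.
    by apply/existsP; exists (s2 n''); rewrite Hn''.
  rewrite (@seg_split _ _ A s2 w2 n (offset r2 j.+1)); [|lia|rewrite /n''; lia].
  rewrite (@seg_split _ _ A s2 w2 (offset r2 j.+1) (offset r2 j2)); [|lia|rewrite /n''; lia].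
  have B1 := seg_le A s2 w2 n (offset r2 j.+1).
  have B3 := seg_le A s2 w2 (offset r2 j2) n''.
  have B2 := cnt_ge Hc2 Hd1 Hjj2.
  have Ecnt : cnt A r2 j.+1 j2 = cnt A r1 j.+1 j2.
    by apply: eq_bigr => t _; rewrite Htl.
  have B4 := cnt_le Hc1 Hjj2.
  have B5 : seg_cost A s1 w1 (offset r1 j.+1) (offset r1 j2) <= seg_cost A s1 w1 p n'.
    apply: seg_mono => //; last by rewrite En'; lia.
    by rewrite /p offS; lia.
  rewrite Hcost in B5.
  have B6 : cnt A r2 j.+1 j2 * d <= b * d by rewrite leq_mul2r Ecnt; apply/orP; right; lia.
  have D1 := Hd1 j. have D2 := Hd1 j2.
  have Eoff := offS r2 j. rewrite /n'' in B3 *.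
  rewrite mulnDl; lia.
- have Hh : has (answers A (nth 0 (fcolors A (r2 j)) k)) (drop k.+1 (fcolors A (r2 j))).
    apply/negPn; rewrite -all_predC; apply/negP => /allP H.
    have := negbT Hall; move/negP; apply; apply/allP => x Hx; exact: H x Hx.
  move/(has_nthP 0): Hh => [i Hi Ha].
  rewrite size_drop size_fcolors nth_drop in Hi Ha.
  pose n' := offset r2 j + (k.+1 + i).
  apply: (@cor_le _ _ _ _ _ _ (seg_cost A s2 w2 n n')).
    exists n'; split; first by rewrite /n' En; lia.
    split; last by [].
    by rewrite Hcn /n' SE2 -?colE //; lia.
  have := seg_le A s2 w2 n n'; have := Hd1 j; rewrite /n' En; nia.
Qed.

Theorem lemma1 (Q S : finType) (A : pac Q S)
  (Hcol : (exists q, odd (Omega A q)) /\ (exists q, ~~ odd (Omega A q)))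
  (r1 r2 : nat -> frun Q S) (d b : nat)
  (Hne1 : forall j, 0 < flen (r1 j))
  (Hne2 : forall j, 0 < flen (r2 j))
  (Htype : forall j, ftype A (r1 j) = ftype A (r2 j))
  (Hd : (forall j, flen (r2 j) <= d) /\ (exists j, flen (r2 j) = d))
  (Hchain : forall j, fend A (r1 j) = fstart (r1 j.+1))
  (s1 : nat -> Q) (w1 : nat -> S) (s2 : nat -> Q) (w2 : nat -> S)
  (Hrun1 : is_irun A s1 w1) (Hc1 : is_concat A r1 s1 w1)
  (Hc2 : is_concat A r2 s2 w2) :
  (limsup_Cor_le A s1 w1 b -> limsup_Cor_le A s2 w2 ((b + 2) * d)) /\
  (accepting A s1 w1 -> accepting A s2 w2).
Proof.
case: Hd => Hd1 _; split; first exact: main Hc1 Hc2.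
move=> [b' H]; exists ((b' + 2) * d); exact: main Hc1 Hc2 H.
Qed.
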